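(* There exists an absolute constant $C$ such that the following holds. Let $\lambda_1\ge\lambda_2\ge\dots\ge\lambda_d>0$, and for $t\in\mathbb R^d$ let $\|t\|_{SLOPE}=\sum_{j=1}^d\lambda_jt_j^*$, where $t_1^*\ge\dots\ge t_d^*\ge0$ is the non-increasing rearrangement of $(|t_i|)_{i=1}^d$. Let $\mathcal B=\{t\in\mathbb R^d:\|t\|_{SLOPE}\le1\}$ and $M=\max_{1\le j\le d}\lambda_j^{-1}\sqrt{\log(ed/j)}$. Then $\ell^*(\mathcal B)\le CM$.
   Context: $\ell^*(\mathcal B)=\mathbb E\sup_{t\in\mathcal B}\langle G,t\rangle$ with $G$ a standard Gaussian vector in $\mathbb R^d$. *)

(* Defs.v *)
From HB Require Import structures.
From mathcomp Require Import all_boot all_order all_algebra.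
From mathcomp Require Import all_classical all_reals all_analysis.
From mathcomp Require Import Rstruct Rstruct_topology.
Set Implicit Arguments. Unset Strict Implicit. Unset Printing Implicit Defensive.
Import Order.TTheory GRing.Theory Num.Theory.
Local Open Scope classical_set_scope.
Local Open Scope ring_scope.

(* Non-increasing rearrangement t^*_1 >= ... >= t^*_d of (|t_i|)_i,
   as a sequence of length d (0-indexed: index j stands for t^*_(j+1)). *)
Definition decr_rearr (R : realType) (d : nat) (t : 'I_d -> R) : seq R :=
  sort (fun x y : R => y <= x) [seq `|t i| | i <- enum 'I_d].

Definition slope_norm (R : realType) (d : nat) (lambda t : 'I_d -> R) : R :=
  \sum_(j < d) lambda j * nth 0 (decr_rearr t) j.

Definition slope_ball (R : realType) (d : nat) (lambda : 'I_d -> R)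
  : set ('I_d -> R) := [set t | slope_norm lambda t <= 1].

(* M = max_{1<=j<=d} lambda_j^{-1} sqrt(log(e d / j)); index j : 'I_d stands for j+1 *)
Definition slope_M (R : realType) (d : nat) (lambda : 'I_d -> R) : R :=
  \big[Num.max/0]_(j < d)
     ((lambda j)^-1 * Num.sqrt (ln (expR 1 * d%:R / (j.+1)%:R))).

Definition std_gaussian_vector (R : realType) (dT : measure_display)
  (T : measurableType dT) (P : probability T R) (d : nat) (G : 'I_d -> T -> R) : Prop :=
  (forall i, measurable_fun setT (G i)) /\
  (forall i (A : set R), measurable A ->
      P (G i @^-1` A) = normal_prob 0 1 A) /\
  (forall A : 'I_d -> set R, (forall i, measurable (A i)) ->
      P (\bigcap_i (G i @^-1` A i)) = (\prod_(i < d) P (G i @^-1` A i))%E).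

Definition gauss_mean_width (R : realType) (dT : measure_display)
  (T : measurableType dT) (P : probability T R) (d : nat) (G : 'I_d -> T -> R)
  (B : set ('I_d -> R)) : \bar R :=
  (\int[P]_x ereal_sup [set (\sum_(i < d) G i x * t i)%:E | t in B])%E.

(* Main.v *)
Require Import Defs.
From HB Require Import structures.
From mathcomp Require Import all_boot all_order all_algebra.
From mathcomp Require Import all_classical all_reals all_analysis.
From mathcomp Require Import Rstruct Rstruct_topology.
From mathcomp Require Import measurable_realfun.
From mathcomp Require Import ring lra.
Set Implicit Arguments. Unset Strict Implicit. Unset Printing Implicit Defensive.
Import Order.TTheory GRing.Theory Num.Theory.
Local Open Scope classical_set_scope.
Local Open Scope ring_scope.

Section arith.
Context {R : realType}.

Lemma x_le_exp (x : R) : x <= 2 * expR (x ^+ 2 / 8).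
Proof.
have := expR_ge1Dx (x ^+ 2 / 8); have := sqr_ge0 (x - 2).
move=> h1 h2; nra.
Qed.

Lemma key2 (x s lam M j1 N : R) :
  0 <= x -> 0 <= s -> 0 < lam -> 0 < j1 -> j1 <= N ->
  j1 * lam * s <= 1 ->
  ln (expR 1 * N / j1) <= (M * lam) ^+ 2 -> 1 <= M * lam ->
  x * s <= 2 * M * (lam * s) + 2 * M / N * expR (3 / 8 * x ^+ 2).
Proof.
move=> x0 s0 l0 j0 jN hs hL hm.
have N0 : 0 < N by apply: lt_le_trans jN.
have M0 : 0 < M.
  by have := lt_le_trans ltr01 hm; rewrite pmulr_lgt0.
have F0 : 0 <= 2 * M / N * expR (3 / 8 * x ^+ 2).
  by rewrite !mulr_ge0 ?expR_ge0 ?invr_ge0 ?ltW.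
have [xle|xgt] := leP x (2 * (M * lam)).
  rewrite -[X in X <= _]addr0; apply: lerD => //.
  by apply: (le_trans (ler_wpM2r s0 xle)); rewrite !mulrA.
rewrite -[X in X <= _]add0r; apply: lerD.
  by apply: mulr_ge0; [apply: mulr_ge0; [|apply: ltW]|apply: mulr_ge0; [apply: ltW|]].
set K := 2 * M / N * expR (3 / 8 * x ^+ 2).
have e1 : expR 1 * N / j1 <= expR (x ^+ 2 / 4).
  have pos : 0 < expR 1 * N / j1 by rewrite !mulr_gt0 ?expR_gt0 ?invr_gt0.
  rewrite -[X in X <= _](lnK (x := expR 1 * N / j1)) ?posrE//.
  rewrite ler_expR (le_trans hL)//.
  have : 2 * (M * lam) <= x by apply: ltW.
  move=> h; have m0 : 0 <= M * lam by apply: le_trans hm.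
  nra.
have e2 : N / j1 <= expR (x ^+ 2 / 4).
  apply: le_trans e1; rewrite -mulrA ler_peMl ?divr_ge0 ?ltW//.
  have := expR_ge1Dx (1 : R); lra.
have hx : x <= j1 * lam * K.
  rewrite /K.
  have -> : expR (3 / 8 * x ^+ 2) = expR (x ^+ 2 / 4) * expR (x ^+ 2 / 8).
    by rewrite -exp.expRD; congr expR; field.
  apply: (le_trans (x_le_exp x)).
  have a0 : 0 < j1 / N by rewrite divr_gt0.
  have aN : j1 / N * (N / j1) = 1 by field; apply/andP; split; apply/lt0r_neq0.
  have h4 : 1 <= j1 / N * expR (x ^+ 2 / 4).
    apply: (@le_trans _ _ (j1 / N * (N / j1))); first by rewrite aN.
    by apply: ler_wpM2l => //; apply: ltW.
  have h8 := expR_gt0 (x ^+ 2 / 8).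
  apply: (@le_trans _ _ (2 * expR (x ^+ 2 / 8) * (M * lam) * (j1 / N * expR (x ^+ 2 / 4)))).
    rewrite -mulrA; apply: ler_peMr; first by rewrite mulr_ge0 ?ltW.
    by apply: (le_trans _ (ler_pM _ _ hm h4)); rewrite ?mul1r.
  by rewrite le_eqVlt; apply/orP; left; apply/eqP; ring.
have K0 : 0 <= K by [].
apply: (@le_trans _ _ (j1 * lam * K * s)); first by rewrite ler_wpM2r.
rewrite mulrAC -[X in _ <= X]mul1r ler_wpM2r//.
Qed.

End arith.

Section det.
Context {R : realType}.



Lemma det n (lam : 'I_n.+1 -> R) (M : R) (g t : 'I_n.+1 -> R) :
  (forall i j : 'I_n.+1, (i <= j)%N -> lam j <= lam i) ->
  (forall i, 0 < lam i) ->
  (forall j : 'I_n.+1, (lam j)^-1 * Num.sqrt (ln (expR 1 * n.+1%:R / j.+1%:R)) <= M) ->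
  slope_norm lam t <= 1 ->
  \sum_i g i * t i <= 2 * M + \sum_i (2 * M / n.+1%:R) * expR (3 / 8 * g i ^+ 2).
Proof.
move=> lmono lpos hM hsl.
set s := decr_rearr t.
have ss : sorted (fun x y : R => y <= x) s.
  by apply: sort_sorted => x y; rewrite orbC le_total.
have szs : size s = n.+1 by rewrite size_sort size_map size_enum_ord.
have ps : perm_eq [seq `|t i| | i <- enum 'I_n.+1] s.
  by rewrite perm_sym /s /decr_rearr perm_sort.
have s0 k : 0 <= nth 0 s k.
  have [klt|kge] := ltnP k (size s); last by rewrite nth_default.
  have := mem_nth 0 klt; rewrite -(perm_mem ps) => /mapP[i _ ->].
  exact: normr_ge0.
have smono k j : (k <= j)%N -> (j < n.+1)%N -> nth 0 s j <= nth 0 s k.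
  move=> kj jn.
  have tr : transitive (fun x y : R => y <= x) by move=> ? ? ? h1 h2; exact: le_trans h2 h1.
  have rf : reflexive (fun x y : R => y <= x) by move=> ?; exact: lexx.
  have := sorted_leq_nth tr rf 0 ss.
  move=> /(_ k j); rewrite !inE szs; apply => //.
  exact: leq_ltn_trans jn.
pose lam' k := lam (inord k).
have lam'E (j : 'I_n.+1) : lam' j = lam j by rewrite /lam' inord_val.
have lam'0 k : 0 < lam' k by exact: lpos.
have slopeE : slope_norm lam t = \sum_(k < n.+1) lam' k * nth 0 s k.
  by apply: eq_bigr => k _; rewrite lam'E.
have key1 (j : nat) : (j < n.+1)%N -> j.+1%:R * lam' j * nth 0 s j <= 1.
  move=> jn; apply: le_trans hsl; rewrite slopeE.
  apply: (@le_trans _ _ (\sum_(k < j.+1) lam' k * nth 0 s k)).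
    have -> : j.+1%:R * lam' j * nth 0 s j = \sum_(k < j.+1) (lam' j * nth 0 s j).
      by rewrite sumr_const card_ord -mulrA mulr_natl.
    apply: ler_sum => k _.
    have kj : (k <= j)%N by rewrite -ltnS.
    apply: ler_pM; [exact: ltW|exact: s0| |].
      by rewrite /lam' lmono// !inordK//; apply: leq_ltn_trans jn.
    by apply: smono.
  have := @big_ord_widen R 0 +%R j.+1 n.+1 (fun k => lam' k * nth 0 s k) jn.
  move=> ->.
  rewrite [leRHS](bigID (fun i : 'I_n.+1 => (i < j.+1)%N)) /=.
  rewrite lerDl; apply: sumr_ge0 => k _; apply: mulr_ge0; [exact: ltW|exact: s0].
have [Is pIs tE0] := perm_iotaP 0 ps.
have szI : size Is = n.+1 by rewrite (perm_size pIs) size_iota szs.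
have Islt (i : 'I_n.+1) : (nth 0%N Is i < n.+1)%N.
  have : nth 0%N Is i \in iota 0 (size s) by rewrite -(perm_mem pIs) mem_nth // szI.
  by rewrite mem_iota szs.
have tE (i : 'I_n.+1) : `|t i| = nth 0 s (nth 0%N Is i).
  have := congr1 (fun l => nth 0 l i) tE0 => /=.
  by rewrite (nth_map ord0) ?size_enum_ord // nth_ord_enum (nth_map 0%N) ?szI.
have hMj (j : nat) : (j < n.+1)%N ->
    ln (expR 1 * n.+1%:R / j.+1%:R) <= (M * lam' j) ^+ 2 /\ 1 <= M * lam' j.
  move=> jn; have := hM (inord j); rewrite inordK // -/(lam' j).
  set L := ln _ => hL.
  have L1 : 1 <= L.
    rewrite -[leLHS](expRK 1) ler_ln ?posrE ?expR_gt0 ?mulr_gt0 ?invr_gt0 ?ltr0Sn//.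
    rewrite -mulrA ler_peMr ?expR_ge0// ler_pdivlMr ?ltr0Sn// mul1r ler_nat.
    exact: jn.
  have sL : Num.sqrt L <= M * lam' j.
    have := ler_wpM2l (ltW (lam'0 j)) hL.
    by rewrite mulrA mulfV ?mul1r ?(mulrC (lam' j)) // gt_eqF.
  have s1 : 1 <= Num.sqrt L by rewrite -sqrtr1 ler_sqrt // (le_trans ler01 L1).
  split; last exact: le_trans s1 sL.
  rewrite -(@sqr_sqrtr _ L) ?(le_trans ler01 L1) // !expr2.
  by apply: ler_pM; rewrite ?sqrtr_ge0.
have M0 : 0 <= M.
  have [_ h] := hMj 0%N isT.
  have := lt_le_trans ltr01 h; rewrite pmulr_lgt0 //; exact: ltW.
apply: (@le_trans _ _ (\sum_i `|g i| * nth 0 s (nth 0%N Is i))).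
  apply: ler_sum => i _; rewrite -tE -normrM; exact: ler_norm.
have step2 : \sum_i `|g i| * nth 0 s (nth 0%N Is i) <=
  \sum_(i < n.+1) (2 * M * (lam' (nth 0%N Is i) * nth 0 s (nth 0%N Is i))
   + 2 * M / n.+1%:R * expR (3 / 8 * g i ^+ 2)).
  apply: ler_sum => i _; have [h1 h2] := hMj _ (Islt i).
  rewrite -(real_normK (num_real (g i))).
  apply: (key2 (j1 := (nth 0%N Is i).+1%:R)) => //.
  - by rewrite ler_nat; exact: Islt.
  - exact: key1.
apply: (le_trans step2).
rewrite big_split /= -mulr_sumr lerD2r.
have -> : \sum_(i < n.+1) lam' (nth 0%N Is i) * nth 0 s (nth 0%N Is i) = slope_norm lam t.
  rewrite slopeE.
  transitivity (\sum_(k <- Is) lam' k * nth 0 s k).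
    by rewrite (big_nth 0%N) szI big_mkord.
  rewrite (perm_big _ pIs) szs -(big_mkord xpredT (fun k => lam' k * nth 0 s k)).
  reflexivity.
rewrite -[X in _ <= X]mulr1; apply: ler_wpM2l => //; exact: mulr_ge0.
Qed.
End det.

Section cov.
Context {R : realType}.
Local Open Scope ereal_scope.
Notation mu := (@lebesgue_measure R).
Variable nu : {measure set R -> \bar R}.
Hypothesis hnu : forall A, measurable A ->
  nu A = \int[lebesgue_measure]_(x in A) (normal_pdf 0 1 x)%:E.
Import HBNNSimple.

Lemma indic_step (A : set R) (r : R) : measurable A -> (0 <= r)%R ->
  \int[mu]_x ((r * \1_A x)%:E * (normal_pdf 0 1 x)%:E) = \int[nu]_x (r * \1_A x)%:E.
Proof.
move=> mA r0.
under [RHS]eq_integral do rewrite EFinM.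
rewrite ge0_integralZl//= ?integral_indic// ?setIT; last first.
  by apply/measurable_EFinP; exact: measurable_indic.
under eq_integral do rewrite EFinM -muleA.
rewrite ge0_integralZl//=; last 3 first.
all: try (by move=> x _; apply: mule_ge0; rewrite lee_fin ?normal_pdf_ge0).
all: try (by apply: emeasurable_funM; apply/measurable_EFinP => //; exact: measurable_normal_pdf).
congr (_ * _).
rewrite /= hnu // [RHS]integral_mkcond epatch_indic.
by apply: eq_integral => x _ /=; rewrite muleC.
Qed.

Lemma normal_cov (f : R -> \bar R) : (forall x, 0 <= f x) -> measurable_fun [set: R] f ->
  \int[mu]_x (f x * (normal_pdf 0 1 x)%:E) = \int[nu]_x f x.
Proof.
move=> f0 mf; set g := fun x => (normal_pdf (0:R) 1 x)%:E.
have mE : measurable (@setT R) by [].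
have g0 x : 0 <= g x by rewrite lee_fin normal_pdf_ge0.
have mg : measurable_fun setT g by apply/measurable_EFinP; exact: measurable_normal_pdf.
pose h := nnsfun_approx mE mf.
have -> : \int[nu]_x f x =
    lim (\int[nu]_x (EFin \o h n) x @[n --> \oo]).
  have fE x : f x = lim ((EFin \o h n) x @[n --> \oo]).
    by apply/esym/cvg_lim => //; exact: cvg_nnsfun_approx.
  under eq_integral => x _ do rewrite fE.
  apply: monotone_convergence => //.
  all: try (by move=> n; apply/measurable_EFinP; have := @measurable_funPT _ _ _ _ (h n); exact).
  all: try (by move=> n x Ex //=; rewrite lee_fin).
  all: try (by move=> x Ex a b ab; rewrite lee_fin; exact/lefP/(nd_nnsfun_approx mE mf)).
have -> : \int[mu]_x (f x * g x) =
    lim (\int[mu]_x ((EFin \o h n) \* g) x @[n --> \oo]).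
  have fg x : f x * g x = lim (((EFin \o h n) \* g) x @[n --> \oo]).
    by apply/esym/cvg_lim => //; apply: cvgeZr;
      [by []|exact: cvg_nnsfun_approx].
  under eq_integral => x _ do rewrite fg.
  apply: monotone_convergence => [//| | |].
  - move=> n; apply/emeasurable_funM => //.
    apply/measurable_EFinP. have := @measurable_funPT _ _ _ _ (h n). exact.
  - by move=> n x _; apply: mule_ge0 => //; rewrite lee_fin.
  - move=> x _ a b ab/=; apply: lee_wpmul2r => //; rewrite lee_fin.
    have := nd_nnsfun_approx mE mf ab. move/lefP. exact.
suff suf n : \int[mu]_x ((EFin \o h n) x * g x) =
    \int[nu]_x (EFin \o h n) x.
  by under eq_fun do rewrite suf.
transitivity (\int[nu]_x
   (\sum_(y \in range (h n)) (y * \1_(h n @^-1` [set y]) x)%:E)); last first.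
  by apply: eq_integral => t tE; rewrite /= fimfunE -fsumEFin.
have indich m r : measurable_fun setT (fun x => (r * \1_(h m @^-1` [set r]) x)%:E).
  by apply: (measurable_comp measurableT) => //; exact: measurable_funM.
rewrite ge0_integral_fsum//; last by move=> m y Ey; exact: nnfun_muleindic_ge0.
transitivity (\int[mu]_x (\sum_(y \in range (h n))
    (y * \1_(h n @^-1` [set y]) x)%:E * g x)).
  under [RHS]eq_integral => x xE.
    rewrite -ge0_mule_fsuml => [|y]; last exact: nnfun_muleindic_ge0.
    rewrite fsumEFin //; over.
  apply: eq_integral => x _ /=; congr (_ * _); congr EFin; exact: fimfunE.
rewrite ge0_integral_fsum//;
  try (by move=> r; apply: emeasurable_funM; [have := indich n r; exact|have := mg; exact]);
  try (by move=> r x _; apply: mule_ge0 => //; exact: nnfun_muleindic_ge0);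
  try (by move=> r; have := indich n r; exact).
all: try (move=> r; apply/measurable_EFinP; apply: measurable_funM => //;
  have mA : measurable (h n @^-1` [set r]) by
    rewrite -[X in measurable X]setTI; apply: measurable_funPT);
  try (have := @measurable_indic _ _ _ setT _ mA; exact).
apply: eq_fsbigr => r rhn.
have r0 : (0 <= r)%R by move: rhn; rewrite inE => -[t _ <-].
have mA : measurable (h n @^-1` [set r]).
  by rewrite -[X in measurable X]setTI; apply: measurable_funPT.
exact: indic_step.
Qed.
End cov.

Section meas.
Local Open Scope ereal_scope.

Lemma le_integral_nm d (T : measurableType d) (R : realType)
  (mu : {measure set T -> \bar R}) (f g : T -> \bar R) :
  (forall x, 0 <= f x) -> (forall x, f x <= g x) ->
  \int[mu]_x f x <= \int[mu]_x g x.
Proof.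
move=> f0 fg.
have g0 x : 0 <= g x by apply: le_trans (fg x).
rewrite !ge0_integralTE//.
apply: ereal_sup_le => _ [h hf <-]; exists h => //= x.
exact: le_trans (hf x) (fg x).
Qed.

Context {R : realType}.
Definition kappa : R := (normal_peak (1:R) / normal_peak 2)%R.

Lemma kappa_gt0 : (0 < kappa)%R.
Proof. by rewrite divr_gt0 ?normal_peak_gt0 ?oner_neq0 ?pnatr_eq0. Qed.

Lemma gauss_exp_leb :
  \int[lebesgue_measure]_y ((expR (3 / 8 * y ^+ 2))%:E * (normal_pdf 0 1 y)%:E) = (kappa)%:E.
Proof.
transitivity (\int[lebesgue_measure]_y (kappa%:E * (normal_pdf 0 2 y)%:E)).
  apply: eq_integral => y _; rewrite -!EFinM; congr EFin.
  rewrite !normal_pdfE ?oner_neq0 ?pnatr_eq0 //.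
  rewrite /normal_fun /kappa.
  rewrite mulrCA -exp.expRD [RHS]mulrA divfK ?gt_eqF ?normal_peak_gt0 ?pnatr_eq0 //.
  by congr (_ * expR _)%R; rewrite subr0; field.
rewrite ge0_integralZl//.
all: try (by move=> y _; rewrite lee_fin normal_pdf_ge0).
all: try (by rewrite lee_fin ltW // kappa_gt0).
all: try (by apply/measurable_EFinP; exact: measurable_normal_pdf).
by rewrite integral_normal_pdf mule1.
Qed.

Lemma gauss_exp_P dT (T : measurableType dT) (P : probability T R) (X : T -> R) :
  measurable_fun setT X -> (forall A, measurable A -> P (X @^-1` A) = normal_prob 0 1 A) ->
  \int[P]_x (expR (3 / 8 * X x ^+ 2))%:E = kappa%:E.
Proof.
move=> mX hX.
set f := fun y : R => (expR (3 / 8 * y ^+ 2))%:E.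
have mf : measurable_fun [set: R] f.
  apply/measurable_EFinP; apply: measurableT_comp => //.
  by apply: measurable_funM => //; exact: measurable_funX.
transitivity (\int[pushforward P X]_y f y).
  rewrite ge0_integral_pushforward //= ?preimage_setT//.
  by move=> y _; rewrite lee_fin expR_ge0.
rewrite -normal_cov //.
- by have := gauss_exp_leb; exact.
- by move=> y; rewrite lee_fin expR_ge0.
Qed.
End meas.


Lemma main_gen (R : realType) (n : nat) (lam : 'I_n.+1 -> R)
  (lmono : forall i j : 'I_n.+1, (i <= j)%N -> lam j <= lam i)
  (lpos : forall i, 0 < lam i)
  (dT : measure_display) (T : measurableType dT) (P : probability T R) (G : 'I_n.+1 -> T -> R)
  (hmeas : forall i, measurable_fun setT (G i))
  (hlaw : forall i (A : set R), measurable A -> P (G i @^-1` A) = normal_prob 0 1 A) :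
  (gauss_mean_width P G (slope_ball lam) <= ((2 + 2 * kappa) * slope_M lam)%:E)%E.
Proof.
set M := slope_M lam.
have hM (j : 'I_n.+1) : (lam j)^-1 * Num.sqrt (ln (expR 1 * n.+1%:R / j.+1%:R)) <= M.
  by rewrite /M /slope_M; exact: (le_bigmax (0:R) (fun j : 'I_n.+1 => _) j).
have M0 : 0 <= M.
  apply: le_trans (hM ord0); apply: mulr_ge0; last exact: sqrtr_ge0.
  by rewrite invr_ge0 ltW.
set c := (2 * M / n.+1%:R)%R.
have c0 : 0 <= c by rewrite /c divr_ge0 ?mulr_ge0.
have pt x : (ereal_sup [set (\sum_i G i x * t i)%:E | t in slope_ball lam] <=
    (2 * M + \sum_i c * expR (3 / 8 * G i x ^+ 2))%:E)%E.
  apply: ge_ereal_sup => _ [t ht <-]; rewrite lee_fin; have := @det _ n lam M (fun i => G i x) t lmono lpos hM ht. rewrite -/c. exact.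
have pt0 x : (0 <= ereal_sup [set (\sum_i G i x * t i)%:E | t in slope_ball lam])%E.
  apply: ereal_sup_ubound; exists (fun _ => 0%R).
    have z k : nth 0 (decr_rearr (fun _ : 'I_n.+1 => 0 : R)) k = 0.
      have [klt|kge] := ltnP k (size (decr_rearr (fun _ : 'I_n.+1 => 0 : R))); last by rewrite nth_default.
      have := mem_nth 0 klt; rewrite /decr_rearr mem_sort => /mapP[i _ ->]; by rewrite normr0.
    by rewrite /slope_ball /= /slope_norm big1 ?ler01 // => j _; rewrite z mulr0.
  by rewrite big1 // => i _; rewrite mulr0.
rewrite /gauss_mean_width.
apply: le_trans (le_integral_nm _ pt0 pt) _.
have mi i : measurable_fun setT (fun x => (c * expR (3 / 8 * G i x ^+ 2))%:E).
  apply/measurable_EFinP; apply: measurable_funM; first exact: measurable_cst.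
  apply: measurableT_comp; first exact: measurable_expR.
  apply: measurable_funM; first exact: measurable_cst.
  exact: measurable_funX.
have hi i : (\int[P]_x (c * expR (3 / 8 * G i x ^+ 2))%:E = (c * kappa)%:E)%E.
  under eq_integral do rewrite EFinM.
  rewrite ge0_integralZl//=.
  all: try (by move=> x _; rewrite lee_fin expR_ge0).
  all: try (by rewrite lee_fin).
  all: try (apply/measurable_EFinP; apply: measurableT_comp; first exact: measurable_expR;
    apply: measurable_funM; first exact: measurable_cst; exact: measurable_funX).
  by rewrite (gauss_exp_P (hmeas i) (hlaw i)) -EFinM.
under eq_integral do rewrite EFinD -sumEFin.
rewrite ge0_integralD //; last 3 first.
- by move=> x _; rewrite lee_fin mulr_ge0.
- by move=> x _; rewrite sume_ge0 // => i _; rewrite lee_fin mulr_ge0 ?expR_ge0.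
- exact: emeasurable_sum.
rewrite integral_cst //= probability_setT mule1.
rewrite ge0_integral_sum //; last first.
  by move=> i x _; rewrite lee_fin mulr_ge0 ?expR_ge0.
rewrite (eq_bigr _ (fun i _ => hi i)) sumEFin -EFinD lee_fin sumr_const card_ord.
rewrite le_eqVlt; apply/orP; left; apply/eqP.
rewrite /c -mulr_natr; field.
by rewrite addrC natr1 pnatr_eq0.
Qed.

Theorem proposition5p11 :
  exists C : Rdefinitions.R,
  forall (d : nat) (lambda : 'I_d -> Rdefinitions.R),
    (0 < d)%N ->
    (forall i j : 'I_d, (i <= j)%N -> lambda j <= lambda i) ->
    (forall i, 0 < lambda i) ->
    forall (dT : measure_display) (T : measurableType dT)
           (P : probability T Rdefinitions.R) (G : 'I_d -> T -> Rdefinitions.R),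
      std_gaussian_vector P G ->
      (gauss_mean_width P G (slope_ball lambda) <= (C * slope_M lambda)%:E)%E.
Proof.
exists (2 + 2 * kappa)%R.
move=> d lam d0 lmono lpos dT T P G [hmeas [hlaw _]].
case: d lam lmono lpos G hmeas hlaw d0 => [//|n] lam lmono lpos G hmeas hlaw _.
exact: main_gen.
Qed.
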